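(* Let $p\ge 2$ and $\varphi\in\mathbb{C}^{p-1}\setminus\Omega$. Then $\dim Z^2_{1}(F_\varphi,F_\varphi)=2(p-1)$; a basis is given by the cochains $\psi^1_{2,j}$ ($3\le j\le 2p$) defined by $\psi^1_{2,j}(X_2,X_j)=X_1$ and zero on all other basis pairs (up to antisymmetry).
   Context: Let $p\ge 2$ and $\varphi=(\varphi_1,\dots,\varphi_{p-1})\in\mathbb{C}^{p-1}$. $F_\varphi$ denotes the $2p$-dimensional complex Lie algebra with basis $X_1,\dots,X_{2p}$ whose nonzero brackets (up to antisymmetry) are $[X_1,X_2]=X_1$, $[X_2,X_{2k+1}]=\varphi_kX_{2k+1}$, $[X_2,X_{2k+2}]=-(1+\varphi_k)X_{2k+2}$, $[X_{2k+1},X_{2k+2}]=X_1$ for $1\le k\le p-1$. It is graded by $(F_\varphi)_0=\mathbb{C}X_2$, $(F_\varphi)_1=\operatorname{span}\{X_3,\dots,X_{2p}\}$, $(F_\varphi)_2=\mathbb{C}X_1$. A $2$-cochain $\psi$ is homogeneous of degree $k$ if $\psi((F_\varphi)_i,(F_\varphi)_j)\subset(F_\varphi)_{i+j+k}$; $Z^2_k(F_\varphi,F_\varphi)$ denotes the space of homogeneous degree-$k$ $2$-cocycles of the Chevalley–Eilenberg complex with adjoint coefficients. $\Omega=\Omega_1\cup\Omega_2\subset\mathbb{C}^{p-1}$, where $\Omega_1$ is the union of the hyperplanes $\{1+\varphi_i+\varphi_j=0\}$, $\{2+\varphi_i+\varphi_j=0\}$ ($1\le i,j\le p-1$), $\{\varphi_i-\varphi_j=0\}$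 ($i\ne j$), $\{\varphi_i=0\}$, $\{\varphi_i+1=0\}$, $\{2\varphi_i+1=0\}$, and $\Omega_2$ is the union of $\{1+\varphi_i-\varphi_j=0\}$, $\{\varphi_i+\varphi_j=0\}$, $\{2+\varphi_i=0\}$, $\{1-\varphi_i=0\}$, $\{1+2\varphi_i-\varphi_j=0\}$, $\{1+2\varphi_i+\varphi_j=0\}$, $\{2\varphi_i-\varphi_j=0\}$, $\{2+2\varphi_i+\varphi_j=0\}$ ($1\le i,j\le p-1$). *)

(* Defs.v *)
From HB Require Import structures.
From mathcomp Require Import all_boot all_order all_algebra.
From mathcomp Require Import complex.
From mathcomp Require Import reals.
Set Implicit Arguments. Unset Strict Implicit. Unset Printing Implicit Defensive.
Import Order.TTheory GRing.Theory Num.Theory.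
Local Open Scope ring_scope.

Section Fphi.
Variable (R : realType).
Local Notation C := (R[i]).

(* Basis X_1,...,X_{2p} is indexed 0-based by 'I_(2p): X_{a+1} <-> index a. *)

Definition ev (n : nat) (a : nat) : 'rV[C]_n := \row_(m < n) (if val m == a then 1 else 0).

(* phi_k for k in 1..p-1 (1-based, as in the paper); 0 outside the range *)
Definition phik (m : nat) (phi : 'I_m -> C) (k : nat) : C :=
  match insub k.-1 with Some i => phi i | None => 0 end.

(* Lie bracket of basis elements [X_{a+1}, X_{b+1}] of F_phi (n = 2p) *)
Definition brb (p : nat) (phi : 'I_p.-1 -> C) (a b : nat) : 'rV[C]_(2 * p) :=
  let e := ev (2 * p) in
  if (a == 0%N) && (b == 1%N) then e 0%N
  else if (a == 1%N) && (b == 0%N) then - e 0%N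
  else if (a == 1%N) && (2 <= b)%N then
    (if ~~ odd b then phik phi b./2 *: e b else - (1 + phik phi b./2) *: e b)
  else if (2 <= a)%N && (b == 1%N) then
    - (if ~~ odd a then phik phi a./2 *: e a else - (1 + phik phi a./2) *: e a)
  else if (2 <= a)%N && (2 <= b)%N then
    (if ~~ odd a && (b == a.+1) then e 0%N
     else if ~~ odd b && (a == b.+1) then - e 0%N else 0)
  else 0.

Definition adL (p : nat) (phi : 'I_p.-1 -> C) (a : nat) (v : 'rV[C]_(2 * p))
  : 'rV[C]_(2 * p) := \sum_(j < 2 * p) v 0 j *: brb phi a j.

(* 2-cochains with adjoint coefficients: bilinear maps F x F -> F, given by their
   values on pairs of basis elements *)
Definition cochain (n : nat) := {ffun 'I_n * 'I_n -> 'rV[C]_n}.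

Definition psiL (n : nat) (psi : cochain n) (v : 'rV[C]_n) (c : 'I_n) : 'rV[C]_n :=
  \sum_(i < n) v 0 i *: psi (i, c).

Definition alternating (n : nat) (psi : cochain n) : Prop :=
  forall i j : 'I_n, psi (i, j) = - psi (j, i).

Definition cocycle (p : nat) (phi : 'I_p.-1 -> C) (psi : cochain (2 * p)) : Prop :=
  forall a b c : 'I_(2 * p),
    adL phi a (psi (b, c)) - adL phi b (psi (a, c)) + adL phi c (psi (a, b))
    - psiL psi (brb phi a b) c + psiL psi (brb phi a c) b - psiL psi (brb phi b c) a = 0.

Definition gdeg (a : nat) : int := if a == 0%N then 2 else if a == 1%N then 0 else 1.

Definition homogeneous (n : nat) (k : int) (psi : cochain n) : Prop :=
  forall i j l : 'I_n, gdeg l != gdeg i + gdeg j + k -> psi (i, j) 0 l = 0.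

Definition Z2 (p : nat) (phi : 'I_p.-1 -> C) (k : int) (psi : cochain (2 * p)) : Prop :=
  [/\ alternating psi, cocycle phi psi & homogeneous k psi].

(* psi^1_{2,j}: (X_2, X_j) |-> X_1, (X_j, X_2) |-> -X_1, zero elsewhere;
   here jj = j - 1 is the 0-based index of X_j *)
Definition psi2 (n : nat) (jj : 'I_n) : cochain n :=
  [ffun ij : 'I_n * 'I_n =>
     if (val ij.1 == 1%N) && (ij.2 == jj) then ev n 0
     else if (ij.1 == jj) && (val ij.2 == 1%N) then - ev n 0 else 0].

Definition psi2_family (n : nat) : seq (cochain n) :=
  [seq psi2 jj | jj <- enum 'I_n & (2 <= val jj)%N].

Definition Omega1 (m : nat) (phi : 'I_m -> C) : Prop :=
  exists i j : 'I_m,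
    1 + phi i + phi j = 0 \/ 2 + phi i + phi j = 0 \/ (i != j /\ phi i - phi j = 0)
    \/ phi i = 0 \/ phi i + 1 = 0 \/ 2 * phi i + 1 = 0.

Definition Omega2 (m : nat) (phi : 'I_m -> C) : Prop :=
  exists i j : 'I_m,
    1 + phi i - phi j = 0 \/ phi i + phi j = 0 \/ 2 + phi i = 0 \/ 1 - phi i = 0
    \/ 1 + 2 * phi i - phi j = 0 \/ 1 + 2 * phi i + phi j = 0
    \/ 2 * phi i - phi j = 0 \/ 2 + 2 * phi i + phi j = 0.

Definition Omega (m : nat) (phi : 'I_m -> C) : Prop := Omega1 phi \/ Omega2 phi.

End Fphi.

(* Main.v *)
Require Import Defs.
From HB Require Import structures.
From mathcomp Require Import all_boot all_order all_algebra.
From mathcomp Require Import complex reals zify ring.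
Import Order.TTheory GRing.Theory Num.Theory.
Local Open Scope ring_scope.

Section Pf.
Variable R : realType.
Variable p : nat.
Variable phi : 'I_p.-1 -> R[i].
Hypothesis hp : (2 <= p)%N.
Local Notation C := (R[i]).
Local Notation n := (2 * p)%N.

Lemma lt0n : (0 < n)%N. Proof. lia. Qed.
Lemma lt1n : (1 < n)%N. Proof. lia. Qed.
Definition i0 : 'I_n := Ordinal lt0n.
Definition i1 : 'I_n := Ordinal lt1n.
Local Notation e0 := (ev R n 0).

Lemma brb_anti a b : brb phi a b = - brb phi b a.
Proof.
rewrite /brb; case: a => [|[|a]]; case: b => [|[|b]] /=; rewrite ?oppr0 ?opprK //.
all: try (case: eqP => [->|nb]; case: eqP => [|na]; rewrite ?oppr0 ?opprK //; try lia).
all: try move=> _; rewrite ?andbT ?andbF /=; try case: ifP => _; by rewrite ?oppr0 ?opprK.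
Qed.

Lemma brb1 a b (m : 'I_n) : val m = 1%N -> brb phi a b 0 m = 0.
Proof.
move=> hm; rewrite /brb; case: a => [|[|a]]; case: b => [|[|b]] /=;
  repeat case: ifP => _; rewrite !mxE ?hm //= ?mxE ?hm //= ?mulr0 ?oppr0 //.
Qed.

Lemma brb2 a b (m : 'I_n) : a != 1%N -> b != 1%N -> val m != 0%N -> brb phi a b 0 m = 0.
Proof.
move=> ha hb /negbTE hm; rewrite /brb; case: a ha => [|[|a]] //= _; case: b hb => [|[|b]] //= _;
  repeat case: ifP => _; rewrite ?mxE ?hm ?oppr0 //.
Qed.

Lemma brb_x0 a : brb phi a 0 = (if a == 1%N then - e0 else 0).
Proof. by rewrite /brb; case: a => [|[|a]]. Qed.

Lemma brb11 : brb phi 1 1 = 0.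
Proof. by []. Qed.

Lemma adL_e0 (a : nat) (s : C) : adL phi a (s *: e0) = (if a == 1%N then - s else 0) *: e0.
Proof.
rewrite /adL (bigD1 i0) //= big1 => [|j hj].
  rewrite !mxE /= mulr1 addr0 brb_x0; case: ifP => _; by rewrite ?scaler0 ?scale0r ?scalerN ?scaleNr.
rewrite !mxE; have -> : (val j == 0%N) = false.
  by apply/negbTE; apply: contra hj => /eqP h; apply/eqP/val_inj.
by rewrite mulr0 scale0r.
Qed.

Lemma xnegx (x : C) : x = - x -> x = 0.
Proof.
move=> h; have : x *+ 2 = 0 by rewrite mulr2n {1}h addNr.
by move/eqP; rewrite mulrn_eq0 /= => /eqP.
Qed.


Section Shape.
Variable psi : cochain R n.
Hypothesis halt : alternating psi.
Hypothesis hhom : homogeneous 1 psi.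

Definition fv (x y : 'I_n) : C := psi (x, y) 0 i0.

Lemma gdegE (a : nat) : gdeg a = if a == 0%N then 2 else if a == 1%N then 0 else 1.
Proof. by []. Qed.

Lemma fv_anti x y : fv x y = - fv y x.
Proof. by rewrite /fv halt mxE. Qed.

Lemma fv_hom x y : val x != 1%N -> val y != 1%N -> fv x y = 0.
Proof.
move=> /negbTE hx /negbTE hy; apply: hhom; rewrite !gdegE /= hx hy.
by repeat case: ifP => _.
Qed.

Lemma fv_0l x y : val x = 0%N -> fv x y = 0.
Proof.
move=> hx; apply: hhom; rewrite !gdegE /= hx /=.
by repeat case: ifP => _.
Qed.

Lemma fv11 : fv i1 i1 = 0.
Proof. by apply: hhom. Qed.

Lemma shape x y : psi (x, y) = fv x y *: e0.
Proof.
apply/rowP => l; rewrite !mxE.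
have [hl|hl] := eqVneq (val l) 0%N.
  have El : l = i0 by apply: val_inj.
  by rewrite El /= mulr1.
rewrite mulr0.
have [/andP [/eqP hx /eqP hy]|hxy] := boolP ((val x == 1%N) && (val y == 1%N)).
  have -> : x = i1 by apply: val_inj.
  have -> : y = i1 by apply: val_inj.
  by apply: xnegx; rewrite {1}halt mxE.
apply: hhom; rewrite !gdegE (negbTE hl).
move: hxy; case: (val x == 1%N); case: (val y == 1%N) => //= _;
 by repeat case: ifP => _.
Qed.

Lemma psiL_e v c : psiL psi v c = (\sum_i v 0 i * fv i c) *: e0.
Proof.
rewrite /psiL; under eq_bigr do rewrite shape scalerA.
by rewrite scaler_suml.
Qed.

Definition Pf (a b c : 'I_n) : C := \sum_i brb phi a b 0 i * fv i c.

Lemma Pf_c a b c : val c != 1%N -> Pf a b c = 0.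
Proof.
move=> hc; rewrite /Pf big1 // => i _.
have [hi|hi] := eqVneq (val i) 1%N.
  by rewrite brb1 // mul0r.
by rewrite fv_hom // mulr0.
Qed.

Lemma Pf_anti a b c : Pf a b c = - Pf b a c.
Proof.
rewrite /Pf -sumrN; apply: eq_bigr => i _.
by rewrite brb_anti mxE mulNr.
Qed.

Lemma Pf_ab a b c : val a != 1%N -> val b != 1%N -> Pf a b c = 0.
Proof.
move=> ha hb; rewrite /Pf big1 // => i _.
have [hi|hi] := eqVneq (val i) 0%N.
  by rewrite fv_0l // mulr0.
by rewrite brb2 // mul0r.
Qed.

Lemma Pf111 c : Pf i1 i1 c = 0.
Proof. by rewrite /Pf big1 // => i _; rewrite brb11 mxE mul0r. Qed.

Lemma cocycle_shape : cocycle phi psi.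
Proof.
move=> a b c.
rewrite !shape !adL_e0 !psiL_e -/(Pf a b c) -/(Pf a c b) -/(Pf b c a).
set S := (if _ then _ else _) *: _ - _ + _ - _ + _ - _.
have -> : S = ((if val a == 1%N then - fv b c else 0) - (if val b == 1%N then - fv a c else 0)
   + (if val c == 1%N then - fv a b else 0) - Pf a b c + Pf a c b - Pf b c a) *: e0.
  by rewrite /S !scalerDl !scaleNr.
apply/eqP; rewrite scaler_eq0; apply/orP; left; apply/eqP.
have [ha|ha] := eqVneq (val a) 1%N;
have [hb|hb] := eqVneq (val b) 1%N;
have [hc|hc] := eqVneq (val c) 1%N.
all: try (have Ea : a = i1 by apply: val_inj).
all: try (have Eb : b = i1 by apply: val_inj).
all: try (have Ec : c = i1 by apply: val_inj).
all: try subst a; try subst b; try subst c; rewrite ?eqxx /= ?(negbTE ha) ?(negbTE hb) ?(negbTE hc).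
- by rewrite fv11 !Pf111; ring.
- by rewrite (Pf_c _ _ _ hc); ring.
- by rewrite (Pf_c _ _ _ hb) (Pf_anti b) (fv_anti b); ring.
- by rewrite (Pf_c _ _ _ hb) (Pf_c _ _ _ hc) (fv_hom _ _ hb hc) (Pf_ab _ _ _ hb hc); ring.
- by rewrite (Pf_c _ _ _ ha); ring.
- by rewrite (Pf_c _ _ _ ha) (Pf_c _ _ _ hc) (fv_hom _ _ ha hc) (Pf_ab _ _ _ ha hc); ring.
- by rewrite (Pf_c _ _ _ ha) (Pf_c _ _ _ hb) (fv_hom _ _ ha hb) (Pf_ab _ _ _ ha hb); ring.
- by rewrite (Pf_c _ _ _ ha) (Pf_c _ _ _ hb) (Pf_c _ _ _ hc); ring.
Qed.

End Shape.

Definition Pp (psi : cochain R n) := alternating psi /\ homogeneous 1 psi.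

Lemma Pp_lin (a : C) x y : Pp x -> Pp y -> Pp (a *: x + y).
Proof.
move=> [ax hx] [ay hy]; split.
  by move=> i j; rewrite !ffunE ax ay opprD scalerN.
move=> i j l hl; rewrite !ffunE !mxE hx // hy // mulr0 addr0 //.
Qed.

Lemma Pp0 : Pp 0.
Proof. by split; [move=> i j; rewrite !ffunE oppr0 | move=> i j l _; rewrite !ffunE mxE]. Qed.

Lemma Pp_psi2 jj : (2 <= val jj)%N -> Pp (@psi2 R n jj).
Proof.
move=> h2; have hjj1 : val jj != 1%N by apply/eqP; lia.
have hjj0 : val jj != 0%N by apply/eqP; lia.
split.
{ move=> i j; rewrite !ffunE /=.
  have [->|hi] := eqVneq i jj; have [->|hj] := eqVneq j jj;
   rewrite ?andbT ?andbF /= ?eqxx ?(negbTE hjj1) //=.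
  all: try (by rewrite oppr0).
  all: by case: (_ == 1%N); rewrite ?opprK ?oppr0. }
move=> i j l; rewrite ffunE /=.
case: ifP => [/andP [/eqP hi /eqP ->]|_].
  rewrite mxE; have [hl|hl] := eqVneq (val l) 0%N => //.
  by rewrite !gdegE hi hl (negbTE hjj0) (negbTE hjj1).
case: ifP => [/andP [/eqP -> /eqP hj]|_]; last by rewrite mxE.
rewrite !mxE; have [hl|hl] := eqVneq (val l) 0%N; rewrite ?oppr0 //.
by rewrite !gdegE hj hl (negbTE hjj0) (negbTE hjj1).
Qed.

Local Notation fam := (psi2_family R n).
Local Notation jjs := [seq jj <- enum 'I_n | (2 <= val jj)%N].

Lemma span_Pp psi : psi \in <<fam>>%VS -> Pp psi.
Proof.
move=> /(@coord_span _ _ _ (in_tuple fam)) ->.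
apply: (big_ind Pp) => [|x y hx hy|i _]; first exact: Pp0.
  by rewrite -[x]scale1r; apply: Pp_lin.
rewrite -[_ *: _]addr0; apply: Pp_lin; last exact: Pp0.
have : fam`_i \in fam by apply: mem_nth.
by case/mapP => jj; rewrite mem_filter => /andP [h2 _] ->; apply: Pp_psi2.
Qed.

Lemma Pp_span psi : Pp psi -> psi \in <<fam>>%VS.
Proof.
move=> [halt hhom].
have E : psi = \sum_(jj : 'I_n | (2 <= val jj)%N) fv psi i1 jj *: @psi2 R n jj.
  apply/ffunP => -[x y]; rewrite sum_ffunE (shape _ halt hhom).
  under eq_bigr => jj _ do rewrite ffunE ffunE /=.
  have [hx|hx] := eqVneq (val x) 1%N.
    have Ex : x = i1 by apply: val_inj.
    subst x.
    have [h2|h2] := boolP (2 <= val y)%N.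
      rewrite (bigD1 y) //= eqxx big1 ?addr0 // => jj /andP [hjj hne].
      rewrite eq_sym (negbTE hne) /=; case: ifP => [/andP [/eqP E _]|_]; last by rewrite scaler0.
      by move: hjj; rewrite -E.
    rewrite big1 => [|jj hjj].
      have [hy|hy] := eqVneq (val y) 1%N.
        have -> : y = i1 by apply: val_inj. 
        by rewrite (fv11 _ hhom) ?scale0r.
      have hy0 : val y = 0%N by move: h2 hy; case: (val y) => [|[|k]].
      by rewrite (fv_anti _ halt) (fv_0l _ hhom) // oppr0 scale0r.
    have -> : (y == jj) = false by apply/negbTE; apply: contra h2 => /eqP ->.
    by case: ifP => [/andP [/eqP E _]|_]; [move: hjj; rewrite -E | rewrite scaler0].
  under eq_bigr => jj _ do rewrite /=.
  have [hy|hy] := eqVneq (val y) 1%N.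
    have Ey : y = i1 by apply: val_inj.
    subst y.
    have [h2|h2] := boolP (2 <= val x)%N.
      rewrite (bigD1 x) //= eqxx big1 ?addr0 => [|jj /andP [hjj hne]].
        by rewrite (fv_anti _ halt) scalerN scaleNr.
      by rewrite eq_sym (negbTE hne) /= scaler0.
    rewrite big1 => [|jj hjj].
      have hx0 : val x = 0%N by move: h2 hx; case: (val x) => [|[|k]].
      by rewrite (fv_0l _ hhom) // scale0r.
    have -> : (x == jj) = false by apply/negbTE; apply: contra h2 => /eqP ->.
    by rewrite scaler0.
  rewrite (fv_hom _ hhom) // scale0r big1 // => jj _.
  by rewrite andbF scaler0.
rewrite E; apply: rpred_sum => jj hjj; apply: rpredZ; apply: memv_span.
by apply/mapP; exists jj => //; rewrite mem_filter hjj mem_enum.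
Qed.

Lemma jjs_ge2 j : (j < size jjs)%N -> (2 <= val (nth i1 jjs j))%N.
Proof. by move=> hj; have := mem_nth i1 hj; rewrite mem_filter; case/andP. Qed.

Lemma fam_free : free fam.
Proof.
apply/(@freeP _ _ _ (in_tuple fam)) => k hk i.
have hi : (i < size jjs)%N by rewrite -(size_map (@psi2 R n)); exact: ltn_ord.
have H : (\sum_(i' < size fam) k i' *: fam`_i') (i1, nth i1 jjs i) 0 i0 = 0.
  by rewrite hk ffunE mxE.
rewrite sum_ffunE summxE (bigD1 i) //= big1 ?addr0 in H.
  by rewrite ffunE mxE (nth_map i1 _ _ hi) ffunE /= eqxx mxE /= mulr1 in H.
move=> j hj.
have hj' : (j < size jjs)%N by rewrite -(size_map (@psi2 R n)); exact: ltn_ord.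
rewrite ffunE mxE (nth_map i1 _ _ hj') ffunE /=.
case: ifP => [/eqP E|_].
  move: hj; rewrite -(inj_eq val_inj) /=.
  by rewrite -(nth_uniq i1 hj' hi) ?E ?eqxx // filter_uniq // enum_uniq.
case: ifP => [/andP [/eqP E _]|_]; last by rewrite mxE mulr0.
by have := jjs_ge2 _ hj'; rewrite -E.
Qed.

Lemma fam_dim : \dim <<fam>>%VS = (2 * (p - 1))%N.
Proof.
rewrite (eqP fam_free) size_map size_filter.
have -> : count (fun jj : 'I_n => (2 <= val jj)%N) (enum 'I_n)
   = count (fun m => (2 <= m)%N) (map val (enum 'I_n)) by rewrite count_map.
rewrite val_enum_ord (_ : (2 * p)%N = 2 + (2 * p - 2))%N; last lia.
rewrite iotaD count_cat /= (@eq_in_count _ _ predT) ?count_predT ?size_iota; first lia.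
by move=> m; rewrite mem_iota => /andP [].
Qed.

End Pf.


Theorem lemma6 (R : realType) (p : nat) (phi : 'I_p.-1 -> R[i]) :
  (2 <= p)%N -> ~ Omega phi ->
  [/\ (forall psi : cochain R (2 * p), Z2 phi 1 psi <-> psi \in <<psi2_family R (2 * p)>>%VS),
      free (psi2_family R (2 * p))
    & \dim <<psi2_family R (2 * p)>>%VS = (2 * (p - 1))%N].
Proof.
move=> hp _; split.
- move=> psi; split.
  + by case=> halt _ hhom; apply: (@Pp_span R p hp psi).
  + move=> h; have [halt hhom] := @span_Pp R p hp psi h; split => //.
    exact: (@cocycle_shape R p phi hp psi halt hhom).
- exact: (@fam_free R p hp).
- exact: (@fam_dim R p hp).
Qed.
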